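(* Let $X$ be a finite set with similarity function $S$, suppose the target clustering $\mathcal{C}^{\ast}$ satisfies stability with respect to $S$, and let $\delta_u$ be the underclustering error of the initial clustering. In the unrestricted-merge model, in any run of the interactive algorithm using the global split procedure and the unrestricted merge procedure (described below), at most $\delta_u$ impure merge requests are issued.
   Context: For nonempty $A,A'\subseteq X$, $S(A,A')$ is the average of $S(x,y)$ over $x\in A,y\in A'$. $\mathcal{C}^{\ast}=\{C^{\ast}_1,\dots,C^{\ast}_k\}$ satisfies stability w.r.t. $S$ if for all $i\neq j$, every nonempty proper $A\subset C^{\ast}_i$ and nonempty $A'\subseteq C^{\ast}_j$: $S(A,C^{\ast}_i\setminus A)>S(A,A')$. For clusterings $\mathcal{A},\mathcal{B}$, $\mathrm{dist}(\mathcal{A},\mathcal{B})=\sum_{A\in\mathcal{A}}(|\{B\in\mathcal{B}:B\cap A\neq\emptyset\}|-1)$; the underclustering error of a clustering $\mathcal{C}$ is $\mathrm{dist}(\mathcal{C}^{\ast},\mathcal{C})$. Average-linkage tree $T_{glob}$ of $X$: leaves are singletons; repeatedly merge the two current nodes $N_1,N_2$ with largest $S(N_1,N_2)$ (ties arbitrary) into parent $N_1\cup N_2$ until the root $X$ remains. Split$(Y)$ for $|Y|\ge2$: with $N$ the deepest node of $T_{glob}$ containing $Y$ and children $N_1,N_2$, output $Y\cap N_1$, $Y\cap N_2$. Process (unrestricted-merge model): starting from the initial clustering, an oracle repeatedly issues split$(C_i)$, allowed only if current cluster $C_i$ contains points of two or more target clusters, or merge$(C_i,C_j)$ for distinct current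 clusters, allowed only if some target cluster meets both. Split procedure: replace $C_i$ by the output of Split$(C_i)$. Unrestricted merge procedure: let $C'_i,C'_j$ be the output of Split$(C_i\cup C_j)$; delete $C_i,C_j$; if $\{C'_i,C'_j\}=\{C_i,C_j\}$ add $C_i\cup C_j$, otherwise add $C'_i,C'_j$. A merge request merge$(C_i,C_j)$ is pure if $C_i$ and $C_j$ are both contained in the same target cluster, and impure otherwise. *)

(* Defs.v *)
From HB Require Import structures.
From mathcomp Require Import all_boot all_order all_algebra.
Set Implicit Arguments. Unset Strict Implicit. Unset Printing Implicit Defensive.
Import Order.TTheory GRing.Theory Num.Theory.
Local Open Scope ring_scope.

Section Clustering.
Variables (R : realFieldType) (T : finType) (S : T -> T -> R).

Definition avgS (A B : {set T}) : R :=
  (\sum_(x in A) \sum_(y in B) S x y) / (#|A| * #|B|)%:R.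

Definition stable (Cstar : {set {set T}}) : Prop :=
  forall Ci Cj, Ci \in Cstar -> Cj \in Cstar -> Ci != Cj ->
  forall A A' : {set T}, A != set0 -> A \proper Ci ->
    A' != set0 -> A' \subset Cj ->
    avgS A (Ci :\: A) > avgS A A'.

Definition cdist (CA CB : {set {set T}}) : nat :=
  (\sum_(A in CA) (#|[set B in CB | ~~ [disjoint B & A]]| - 1))%N.

Definition singletons : {set {set T}} := [set [set x] | x : T].

Definition al_step (P : {set {set T}}) (m : {set T} * {set T})
    (P' : {set {set T}}) : Prop :=
  [/\ m.1 \in P, m.2 \in P, m.1 != m.2,
      (forall N1 N2, N1 \in P -> N2 \in P -> N1 != N2 ->
          avgS N1 N2 <= avgS m.1 m.2)
    & P' = (P :\ m.1 :\ m.2) :|: [set m.1 :|: m.2]].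

Fixpoint al_run (P : {set {set T}}) (ms : seq ({set T} * {set T})) : Prop :=
  match ms with
  | [::] => (#|P| <= 1)%N
  | m :: ms' => exists2 P', al_step P m P' & al_run P' ms'
  end.

(* ms is (the merge sequence of) an average-linkage tree T_glob of X:
   starting from singletons, repeatedly merge a pair of current nodes with
   largest average similarity (ties arbitrary) until one node remains.
   The internal nodes are the unions m.1 :|: m.2 with children m.1, m.2. *)
Definition avg_linkage_tree (ms : seq ({set T} * {set T})) : Prop :=
  al_run singletons ms.

(* Split(Y) = (Y1, Y2): N = m.1 :|: m.2 is the deepest (i.e. smallest)
   node of the tree containing Y, with children m.1, m.2. *)
Definition split_out (ms : seq ({set T} * {set T})) (Y Y1 Y2 : {set T}) : Prop :=
  exists2 m, m \in ms &
    [/\ Y \subset m.1 :|: m.2,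
        (forall m', m' \in ms -> Y \subset m'.1 :|: m'.2 ->
            #|m.1 :|: m.2| <= #|m'.1 :|: m'.2|)%N,
        Y1 = Y :&: m.1 & Y2 = Y :&: m.2].

Definition mixed (Cstar : {set {set T}}) (C : {set T}) : Prop :=
  exists Ct1 Ct2, [/\ Ct1 \in Cstar, Ct2 \in Cstar, Ct1 != Ct2,
                     ~~ [disjoint C & Ct1] & ~~ [disjoint C & Ct2]].

Definition merge_allowed (Cstar : {set {set T}}) (Ci Cj : {set T}) : Prop :=
  exists2 Ct, Ct \in Cstar & ~~ [disjoint Ci & Ct] /\ ~~ [disjoint Cj & Ct].

Definition pure_merge (Cstar : {set {set T}}) (Ci Cj : {set T}) : bool :=
  [exists Ct in Cstar, (Ci \subset Ct) && (Cj \subset Ct)].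

(* one oracle request and its effect; the nat is 1 iff the request is an
   impure merge request, 0 otherwise *)
Inductive req_step (Cstar : {set {set T}}) (ms : seq ({set T} * {set T}))
    (C : {set {set T}}) : {set {set T}} -> nat -> Prop :=
| ReqSplit Ci Y1 Y2 :
    Ci \in C -> mixed Cstar Ci -> split_out ms Ci Y1 Y2 ->
    req_step Cstar ms C ((C :\ Ci) :|: [set Y1; Y2]) 0
| ReqMerge Ci Cj Y1 Y2 :
    Ci \in C -> Cj \in C -> Ci != Cj -> merge_allowed Cstar Ci Cj ->
    split_out ms (Ci :|: Cj) Y1 Y2 ->
    req_step Cstar ms C
      (if [set Y1; Y2] == [set Ci; Cj]
       then (C :\ Ci :\ Cj) :|: [set Ci :|: Cj]
       else (C :\ Ci :\ Cj) :|: [set Y1; Y2])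
      (nat_of_bool (~~ pure_merge Cstar Ci Cj)).

Inductive req_run (Cstar : {set {set T}}) (ms : seq ({set T} * {set T}))
    : {set {set T}} -> {set {set T}} -> nat -> Prop :=
| RunNil C : req_run Cstar ms C C 0
| RunCons C C1 C2 i n :
    req_step Cstar ms C C1 i -> req_run Cstar ms C1 C2 n ->
    req_run Cstar ms C C2 (i + n).

End Clustering.

(* Main.v *)
Require Import Defs.
From HB Require Import structures.
From mathcomp Require Import all_boot all_order all_algebra zify.
Set Implicit Arguments. Unset Strict Implicit. Unset Printing Implicit Defensive.
Import Order.TTheory GRing.Theory Num.Theory.


Section Sets.
Variable T : finType.
Implicit Types A B C D : {set T}.

Lemma meetP B A : reflect (exists2 x, x \in B & x \in A) (~~ [disjoint B & A]).
Proof.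
rewrite -setI_eq0; apply: (iffP (set0Pn _)).
  by case=> x; rewrite inE => /andP[]; exists x.
by case=> x xB xA; exists x; rewrite inE xB.
Qed.

Lemma disjP B A : reflect (forall x, x \in B -> x \in A -> False) [disjoint B & A].
Proof.
apply: (iffP idP).
  move=> d x xB xA; have : ~~ [disjoint B & A] by apply/meetP; exists x.
  by rewrite d.
move=> H; apply/negPn/negP => /meetP [x xB xA]; exact: H x xB xA.
Qed.

End Sets.

Open Scope ring_scope.

Section Alg.
Variables (R : realFieldType) (T : finType) (S : T -> T -> R).
Implicit Types A B D X Y : {set T}.

Lemma cover_all (P : {set {set T}}) :
  (forall x, exists2 B, B \in P & x \in B) -> cover P = setT.
Proof.
move=> H; apply/setP => x; rewrite inE; apply/bigcupP.
by case: (H x) => B BP xB; exists B.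
Qed.

Lemma sum_decomp (P : {set {set T}}) D (g : T -> R) :
  trivIset P -> cover P = setT ->
  \sum_(y in D) g y = \sum_(B in P) \sum_(y in D :&: B) g y.
Proof.
move=> tP cP.
have -> : \sum_(y in D) g y = \sum_(y in cover P | y \in D) g y.
  by apply: eq_bigl => y; rewrite cP inE.
rewrite big_trivIset_cond //; apply: eq_bigr => B _.
by apply: eq_bigl => y; rewrite inE andbC.
Qed.

Definition gS X (y : T) := \sum_(x in X) S x y.

Lemma avgS_E X Y : avgS S X Y = (\sum_(y in Y) gS X y) / (#|X| * #|Y|)%:R.
Proof. rewrite /avgS /gS. rewrite exchange_big. by []. Qed.

Lemma constE (L : R) X Y :
  L * (#|X| * #|Y|)%:R = \sum_(y in Y) (L * #|X|%:R).
Proof. by rewrite sumr_const natrM mulrA mulr_natr. Qed.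

Lemma avg_ltE X Y L : X != set0 -> Y != set0 ->
  (avgS S X Y < L) = (\sum_(y in Y) gS X y < \sum_(y in Y) (L * #|X|%:R)).
Proof.
move=> X0 Y0; rewrite avgS_E -constE ltr_pdivrMr // ltr0n muln_gt0.
by rewrite !card_gt0 X0.
Qed.

Lemma avg_gtE X Y L : X != set0 -> Y != set0 ->
  (L < avgS S X Y) = (\sum_(y in Y) (L * #|X|%:R) < \sum_(y in Y) gS X y).
Proof.
move=> X0 Y0; rewrite avgS_E -constE ltr_pdivlMr // ltr0n muln_gt0.
by rewrite !card_gt0 X0.
Qed.

Lemma avg_leE X Y L : X != set0 -> Y != set0 ->
  (avgS S X Y <= L) = (\sum_(y in Y) gS X y <= \sum_(y in Y) (L * #|X|%:R)).
Proof.
move=> X0 Y0; rewrite avgS_E -constE ler_pdivrMr // ltr0n muln_gt0.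
by rewrite !card_gt0 X0.
Qed.

Lemma avgS_sym X Y : (forall x y, S x y = S y x) -> avgS S X Y = avgS S Y X.
Proof.
move=> sym; rewrite /avgS exchange_big mulnC; congr (_ / _).
by apply: eq_bigr => y _; apply: eq_bigr => x _; rewrite sym.
Qed.

End Alg.

Section Decomp.
Variables (R : realFieldType) (T : finType).

Lemma decomp_le (P : {set {set T}}) D (g h : T -> R) :
  trivIset P -> cover P = setT ->
  (forall B, B \in P -> \sum_(y in D :&: B) g y <= \sum_(y in D :&: B) h y) ->
  \sum_(y in D) g y <= \sum_(y in D) h y.
Proof.
move=> tP cP H; rewrite (sum_decomp _ g tP cP) (sum_decomp _ h tP cP).
by apply: ler_sum => B BP; apply: H.
Qed.

Lemma decomp_lt (P : {set {set T}}) D (g h : T -> R) :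
  trivIset P -> cover P = setT ->
  (forall B, B \in P -> \sum_(y in D :&: B) g y <= \sum_(y in D :&: B) h y) ->
  (exists2 B, B \in P & \sum_(y in D :&: B) g y < \sum_(y in D :&: B) h y) ->
  \sum_(y in D) g y < \sum_(y in D) h y.
Proof.
move=> tP cP H [B0 B0P lt0]; rewrite (sum_decomp _ g tP cP) (sum_decomp _ h tP cP).
rewrite (bigD1 B0) //= [X in _ < X](bigD1 B0) //=.
by apply: ltr_leD => //; apply: ler_sum => B /andP[BP _]; apply: H.
Qed.
End Decomp.

Close Scope ring_scope.

Open Scope ring_scope.

Section Tree.
Variables (R : realFieldType) (T : finType) (S : T -> T -> R).
Variable Cstar : {set {set T}}.
Hypothesis hsym : forall x y, S x y = S y x.
Hypothesis hCs : partition Cstar [set: T].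
Hypothesis hstab : stable S Cstar.

Lemma CsT : trivIset Cstar.
Proof. by case/and3P: hCs. Qed.
Lemma CsD A1 A2 : A1 \in Cstar -> A2 \in Cstar -> A1 != A2 -> [disjoint A1 & A2].
Proof. by move=> h1 h2 ne; move/trivIsetP: CsT; apply. Qed.
Lemma CsCov : cover Cstar = setT.
Proof. by case/and3P: hCs => /eqP. Qed.
Lemma CsC x : exists2 A, A \in Cstar & x \in A.
Proof.
have : x \in cover Cstar by rewrite CsCov inE.
by case/bigcupP => A HAC xA; exists A.
Qed.
Lemma Cs0 A : A \in Cstar -> A != set0.
Proof. case/and3P: hCs => _ _ h HAC; apply/negP => /eqP HE; by rewrite -HE HAC in h. Qed.

Definition good (B : {set T}) := forall A, A \in Cstar ->
  [|| B \subset A, A \subset B | [disjoint A & B]].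

Definition Inv (P : {set {set T}}) :=
  [/\ (forall B1 B2, B1 \in P -> B2 \in P -> B1 != B2 -> [disjoint B1 & B2]),
      (forall x, exists2 B, B \in P & x \in B),
      set0 \notin P & (forall B, B \in P -> good B)].

Lemma nonempty_in (P : {set {set T}}) B : set0 \notin P -> B \in P -> B != set0.
Proof. by move=> h BP; apply/negP => /eqP HE; rewrite -HE BP in h. Qed.

Lemma core P N1 N2 A : Inv P -> N1 \in P -> N2 \in P -> N1 != N2 ->
  (forall N', N' \in P -> N' != N1 -> avgS S N1 N' <= avgS S N1 N2) ->
  A \in Cstar -> N1 \proper A -> [disjoint N2 & A] -> False.
Proof.
move=> [Pd Pc P0 Pg] N1P N2P n12 hmax HAC pr dis.
have tP : trivIset P by apply/trivIsetP => B1 B2 h1 h2 ne; apply: Pd.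
have cP := cover_all Pc.
have N10 := nonempty_in P0 N1P.
have N20 := nonempty_in P0 N2P.
set D := A :\: N1.
have D0 : D != set0.
  have [x xA xN1] := subsetPn (proper_subn pr).
  by apply/set0Pn; exists x; rewrite !inE xA xN1.
set L := avgS S N1 D.
have key : forall B, B \in Cstar -> N2 :&: B != set0 ->
    \sum_(y in N2 :&: B) gS S N1 y < \sum_(y in N2 :&: B) (L * #|N1|%:R).
  move=> B BC ne; rewrite -avg_ltE //.
  have AB : A != B.
    apply/negP => /eqP HE; case/set0Pn: ne => y; rewrite inE => /andP[yN2 yB].
    by move/disjP: dis => /(_ y yN2); apply; rewrite HE.
  exact: (hstab HAC BC AB N10 pr ne (subsetIr _ _)).
have lt1 : avgS S N1 N2 < L.
  rewrite avg_ltE //; apply: (decomp_lt CsT CsCov).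
    move=> B BC; case: (boolP (N2 :&: B == set0)) => [/eqP ->| ne].
      by rewrite !big_set0.
    by apply: ltW; apply: key.
  case/set0Pn: N20 => y yN2; have [B BC yB] := CsC y.
  by exists B => //; apply: key => //; apply/set0Pn; exists y; rewrite inE yN2.
have le2 : L <= avgS S N1 N2.
  rewrite /L avg_leE //; apply: (decomp_le tP cP) => N' N'P.
  case: (boolP (D :&: N' == set0)) => [/eqP ->| ne]; first by rewrite !big_set0.
  case/set0Pn: (ne) => w; rewrite !inE => /andP[/andP[wN1 wA] wN'].
  have nN : N' != N1 by apply/negP => /eqP HE; rewrite -HE wN' in wN1.
  have dN := Pd N' N1 N'P N1P nN.
  have sub : N' \subset D.
    case/or3P: (Pg N' N'P A HAC) => [s|s|d].
    - apply/subsetP => z zN'; rewrite !inE (subsetP s z zN') andbT.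
      by apply/negP => zN1; move/disjP: dN => /(_ z zN' zN1).
    - case/set0Pn: N10 => z zN1; exfalso; move/disjP: dN => /(_ z); apply => //.
      by apply: (subsetP s); apply: (subsetP (proper_sub pr)).
    - by move/disjP: d => /(_ w wA wN') [].
  have -> : D :&: N' = N' by apply/setIidPr.
  rewrite -avg_leE //; first by apply: hmax.
  exact: nonempty_in P0 N'P.
by have := lt_le_trans lt1 le2; rewrite ltxx.
Qed.


Lemma good_union P N1 N2 : Inv P -> N1 \in P -> N2 \in P -> N1 != N2 ->
  (forall M1 M2, M1 \in P -> M2 \in P -> M1 != M2 ->
     avgS S M1 M2 <= avgS S N1 N2) -> good (N1 :|: N2).
Proof.
move=> hI N1P N2P n12 hmax A HAC; have [Pd Pc P0 Pg] := hI.
have h1 : forall N', N' \in P -> N' != N1 -> avgS S N1 N' <= avgS S N1 N2.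
  by move=> N' h ne; apply: hmax => //; rewrite eq_sym.
have h2 : forall N', N' \in P -> N' != N2 -> avgS S N2 N' <= avgS S N2 N1.
  move=> N' h ne; rewrite [avgS S N2 N1]avgS_sym //; apply: hmax => //.
  by rewrite eq_sym.
have n21 : N2 != N1 by rewrite eq_sym.
case/or3P: (Pg N1 N1P A HAC) => [s1|s1|d1].
- case/or3P: (Pg N2 N2P A HAC) => [s2|s2|d2].
  + by rewrite subUset s1 s2.
  + by rewrite (subset_trans s2 (subsetUr _ _)) orbT.
  + case: (boolP (A \subset N1)) => [s|ns].
      by rewrite (subset_trans s (subsetUl _ _)) orbT.
    exfalso; apply: (core hI N1P N2P n12 h1 HAC).
      by rewrite properE s1 ns.
    by rewrite disjoint_sym.
- by rewrite (subset_trans s1 (subsetUl _ _)) orbT.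
- case/or3P: (Pg N2 N2P A HAC) => [s2|s2|d2].
  + case: (boolP (A \subset N2)) => [s|ns].
      by rewrite (subset_trans s (subsetUr _ _)) orbT.
    exfalso; apply: (core hI N2P N1P n21 h2 HAC).
      by rewrite properE s2 ns.
    by rewrite disjoint_sym.
  + by rewrite (subset_trans s2 (subsetUr _ _)) orbT.
  + apply/or3P; apply: Or33; apply/disjP => x xA; rewrite inE => /orP[].
      by move/disjP: d1 => /(_ x xA).
    by move/disjP: d2 => /(_ x xA).
Qed.

Lemma Inv_step P m P' : Inv P -> al_step S P m P' -> Inv P'.
Proof.
move=> hI [m1P m2P n12 hmax ->]; have [Pd Pc P0 Pg] := hI.
set N := m.1 :|: m.2.
have inP' : forall B, B \in (P :\ m.1 :\ m.2) :|: [set N] ->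
    (B \in P /\ B != m.1 /\ B != m.2) \/ B = N.
  move=> B; rewrite !inE => /orP[/and3P[b2 b1 bP]|/eqP ->]; last by right.
  by left.
have dN : forall B, B \in P -> B != m.1 -> B != m.2 -> [disjoint B & N].
  move=> B BP b1 b2; apply/disjP => x xB; rewrite inE => /orP[] xm.
    by move/disjP: (Pd B m.1 BP m1P b1) => /(_ x xB xm).
  by move/disjP: (Pd B m.2 BP m2P b2) => /(_ x xB xm).
split.
- move=> B1 B2 /inP' h1 /inP' h2 ne.
  case: h1 => [[B1P [b11 b12]]|e1]; case: h2 => [[B2P [b21 b22]]|e2].
  + exact: Pd.
  + by rewrite e2; apply: dN.
  + by rewrite e1 disjoint_sym; apply: dN.
  + by rewrite e1 e2 eqxx in ne.
- move=> x; have [B BP xB] := Pc x.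
  case: (boolP (B == m.1)) => [/eqP e|b1].
    by exists N; [rewrite !inE eqxx orbT | rewrite /N inE -e xB].
  case: (boolP (B == m.2)) => [/eqP e|b2].
    by exists N; [rewrite !inE eqxx orbT | rewrite /N inE -e xB orbT].
  by exists B => //; rewrite !inE b1 b2 BP.
- apply/negP => /inP' [[h _]|h]; first by rewrite h in P0.
  have := nonempty_in P0 m1P; case/set0Pn => x xm.
  have : x \in N by rewrite /N inE xm.
  by rewrite -h inE.
- move=> B /inP' [[BP _]|->]; first exact: Pg.
  exact: (good_union hI m1P m2P n12 hmax).
Qed.

Lemma Inv_singletons : Inv (singletons T).
Proof.
have mem : forall B, B \in singletons T -> exists x, B = [set x].
  by move=> B /imsetP [x _ ->]; exists x.
have sin : forall x, [set x] \in singletons T by move=> x; apply/imsetP; exists x.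
split.
- move=> B1 B2 /mem [x ->] /mem [y ->] ne; apply/disjP => z; rewrite !inE.
  by move=> /eqP -> /eqP HE; rewrite HE eqxx in ne.
- by move=> x; exists [set x]; rewrite ?sin ?inE.
- apply/negP => /mem [x HE]; have : x \in [set x] by rewrite inE.
  by rewrite -HE inE.
- move=> B /mem [x ->] A HAC; case: (boolP (x \in A)) => xA.
    by rewrite sub1set xA.
  apply/or3P; apply: Or33; apply/disjP => z zA; rewrite inE => /eqP HE.
  by rewrite -HE zA in xA.
Qed.

Lemma tree_nodes ms P : Inv P -> al_run S P ms ->
  forall m, m \in ms -> [/\ [disjoint m.1 & m.2], good m.1 & good m.2].
Proof.
elim: ms P => [|m0 ms IH] P hI //= [P' st run] m.
rewrite inE => /orP[/eqP ->|mms]; last exact: (IH P' (Inv_step hI st) run).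
have [Pd _ _ Pg] := hI; case: st => m1P m2P n12 _ _.
by split; [apply: Pd | apply: Pg | apply: Pg].
Qed.

End Tree.

Close Scope ring_scope.


Section Count.
Variable T : finType.
Implicit Types (C K Z : {set {set T}}).

Lemma sel_U (p : pred {set T}) X Y :
  [set B in X :|: Y | p B] = [set B in X | p B] :|: [set B in Y | p B].
Proof. by apply/setP => B; rewrite !inE andb_orl. Qed.

Lemma sel_1 (p : pred {set T}) a : #|[set B in [set a] | p B]| = p a.
Proof.
case: (boolP (p a)) => h.
  have -> : [set B in [set a] | p B] = [set a].
    by apply/setP => B; rewrite !inE; case: eqP => // ->.
  by rewrite cards1.
have -> : [set B in [set a] | p B] = set0.
  by apply/setP => B; rewrite !inE; case: eqP => // ->; rewrite (negbTE h).
by rewrite cards0.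
Qed.

Lemma sel_2 (p : pred {set T}) a b : #|[set B in [set a; b] | p B]| <= p a + p b.
Proof. by rewrite sel_U cardsU !sel_1 leq_subr. Qed.

Lemma sel_2eq (p : pred {set T}) a b : a != b ->
  #|[set B in [set a; b] | p B]| = p a + p b.
Proof.
move=> ne; rewrite sel_U cardsU !sel_1.
have -> : [set B in [set a] | p B] :&: [set B in [set b] | p B] = set0.
  apply/setP => B; rewrite !inE; case: (boolP (B == a)) => [/eqP ->|nB].
    by rewrite (negbTE ne) /= !andbF.
  by [].

by rewrite cards0 subn0.
Qed.

Lemma sel_replace (p : pred {set T}) C K Z : K \subset C ->
  #|[set B in (C :\: K) :|: Z | p B]| + #|[set B in K | p B]|
  <= #|[set B in C | p B]| + #|[set B in Z | p B]|.
Proof.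
move=> sKC.
have E : #|[set B in C | p B]| = #|[set B in C :\: K | p B]| + #|[set B in K | p B]|.
  have EC : C = (C :\: K) :|: K.
    apply/setP => B; rewrite !inE; case: (boolP (B \in K)) => /= h.
      by rewrite (subsetP sKC B h).
    by rewrite orbF.
  rewrite {1}EC sel_U cardsU.
  have -> : [set B in C :\: K | p B] :&: [set B in K | p B] = set0.
    by apply/setP => B; rewrite !inE; case: (B \in K); rewrite /= ?andbF.
  by rewrite cards0 subn0.
rewrite E sel_U cardsU.
set u := #|_ :&: _|.
set x := #|[set B in C :\: K | p B]|.
set y := #|[set B in K | p B]|.
set z := #|[set B in Z | p B]|.
clearbody u x y z.
lia.
Qed.

End Count.

Lemma bnd (a1 a2 c1 c2 : bool) : (a1 -> c1 || c2) -> (a2 -> c1 || c2) ->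
  (~~ (a1 && a2) \/ (c1 || c2 -> c1 && c2)) -> (a1 + a2 <= c1 + c2)%N.
Proof.
case: a1; case: a2; case: c1; case: c2 => //= h1 h2 [h|h] //;
  (try by move: (h1 isT)); (try by move: (h2 isT)); by move: (h isT).
Qed.

Lemma bnd1 (a1 a2 c : bool) : (a1 -> c) -> (a2 -> c) -> ~~ (a1 && a2) ->
  (a1 + a2 <= c)%N.
Proof. by case: a1; case: a2; case: c => //= h1 h2; move: (h1 isT). Qed.

Section Main.
Variable T : finType.
Variable Cstar : {set {set T}}.
Variable ms : seq ({set T} * {set T}).
Hypothesis hCs : partition Cstar [set: T].
Hypothesis htree : forall m, m \in ms ->
  [/\ [disjoint m.1 & m.2], good Cstar m.1 & good Cstar m.2].

Definition fC (C : {set {set T}}) (A : {set T}) :=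
  #|[set B in C | ~~ [disjoint B & A]]|.

Lemma meet_sub (X Y A : {set T}) : X \subset Y -> ~~ [disjoint X & A] -> ~~ [disjoint Y & A].
Proof.
move=> s /meetP [x xX xA]; apply/meetP; exists x => //; exact: (subsetP s).
Qed.

Lemma same_target (A1 A2 : {set T}) x : A1 \in Cstar -> A2 \in Cstar -> x \in A1 -> x \in A2 ->
  A1 = A2.
Proof.
move=> h1 h2 x1 x2; apply/eqP; apply/negP => /negP ne.
by move/disjP: (CsD hCs h1 h2 ne) => /(_ x x1 x2).
Qed.

Lemma split_sub (Y Y1 Y2 : {set T}) : split_out ms Y Y1 Y2 -> Y1 \subset Y /\ Y2 \subset Y.
Proof. by case=> m _ [_ _ -> ->]; split; apply: subsetIl. Qed.

Lemma split_prop (Y Y1 Y2 A : {set T}) : mixed Cstar Y -> split_out ms Y Y1 Y2 ->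
  A \in Cstar -> ~~ (~~ [disjoint Y1 & A] && ~~ [disjoint Y2 & A]).
Proof.
move=> [Ct1 [Ct2 [C1 C2 ne m1 m2]]] [m mms [sY _ -> ->]] HAC.
have [d g1 g2] := htree mms.
apply/negP => /andP[/meetP [x x1 xA] /meetP [y y2 yA]].
move: x1 y2; rewrite !inE => /andP[xY xm1] /andP[yY ym2].
have s1 : m.1 \subset A.
  case/or3P: (g1 A HAC) => [//|s|dd].
    by move/disjP: d => /(_ y (subsetP s y yA) ym2).
  by move/disjP: dd => /(_ x xA xm1).
have s2 : m.2 \subset A.
  case/or3P: (g2 A HAC) => [//|s|dd].
    by move/disjP: d => /(_ x xm1 (subsetP s x xA)).
  by move/disjP: dd => /(_ y yA ym2).
have sYA : Y \subset A by apply: (subset_trans sY); rewrite subUset s1 s2.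
case/meetP: m1 => z zY z1; case/meetP: m2 => w wY w2.
have e1 := same_target C1 HAC z1 (subsetP sYA z zY).
have e2 := same_target C2 HAC w2 (subsetP sYA w wY).
by rewrite e1 e2 eqxx in ne.
Qed.

Lemma impure_mixed (Ci Cj : {set T}) : merge_allowed Cstar Ci Cj ->
  ~~ pure_merge Cstar Ci Cj -> mixed Cstar (Ci :|: Cj).
Proof.
move=> [A HAC [mi mj]] np.
have nsub : ~~ (Ci :|: Cj \subset A).
  apply/negP => s; move: np; rewrite /pure_merge; apply/negP/negPn.
  by apply/existsP; exists A; rewrite HAC -subUset s.
have [y yY yA] := subsetPn nsub.
have [B BC yB] := CsC hCs y.
exists A, B; split => //.
- by apply/negP => /eqP HE; rewrite HE yB in yA.
- by apply: meet_sub mi; apply: subsetUl.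
- by apply/meetP; exists y.
Qed.

Lemma pot_le (C C' : {set {set T}}) : (forall A, A \in Cstar -> fC C' A <= fC C A) ->
  cdist Cstar C' <= cdist Cstar C.
Proof.
move=> h; apply: leq_sum => A HAC; apply: leq_sub2r; exact: h.
Qed.

Lemma pot_lt (C C' : {set {set T}}) (A0 : {set T}) : (forall A, A \in Cstar -> fC C' A <= fC C A) ->
  A0 \in Cstar -> fC C' A0 < fC C A0 -> 2 <= fC C A0 ->
  (1 + cdist Cstar C' <= cdist Cstar C)%N.
Proof.
move=> h A0C lt ge; rewrite /cdist (bigD1 A0) //= [X in _ <= X](bigD1 A0) //=.
have le : (\sum_(i in Cstar | i != A0) (#|[set B in C' | ~~ [disjoint B & i]]| - 1)
   <= \sum_(i in Cstar | i != A0) (#|[set B in C | ~~ [disjoint B & i]]| - 1))%N.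
  apply: leq_sum => A /andP[HAC _]; apply: leq_sub2r; exact: h.
move: lt ge le; rewrite /fC.
set a := #|[set B in C' | _]|; set b := #|[set B in C | _]|.
set s1 := (\sum_(i in Cstar | i != A0) _)%N; set s2 := (\sum_(i in Cstar | i != A0) _)%N.
clearbody a b s1 s2; lia.
Qed.

Lemma selK (p : pred {set T}) (K C : {set {set T}}) : K \subset C ->
  #|[set B in K | p B]| <= #|[set B in C | p B]|.
Proof.
move=> s; apply: subset_leq_card; apply/subsetP => B; rewrite !inE.
by case/andP => BK ->; rewrite (subsetP s B BK).
Qed.

Lemma step_pot (C C' : {set {set T}}) i : req_step Cstar ms C C' i ->
  (i + cdist Cstar C' <= cdist Cstar C)%N.
Proof.
case.
- move=> Ci Y1 Y2 CiC mix sp; rewrite add0n; apply: pot_le => A HAC.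
  have sK : [set Ci] \subset C by rewrite sub1set.
  have := sel_replace (fun B => ~~ [disjoint B & A]) [set Y1; Y2] sK.
  rewrite sel_1 /fC.
  have := sel_2 (fun B => ~~ [disjoint B & A]) Y1 Y2.
  have [s1 s2] := split_sub sp.
  have b2 : (~~ [disjoint Y1 & A] + ~~ [disjoint Y2 & A] <= ~~ [disjoint Ci & A])%N.
    apply: bnd1; try (move=> h; exact: meet_sub h).
    exact: (split_prop mix sp HAC).
  move: b2; set u := #|_|; set v := #|_|; set w := #|_|.
  set a1 := nat_of_bool _; set a2 := nat_of_bool _; set c := nat_of_bool _.
  by clearbody u v w a1 a2 c; lia.
move=> Ci Cj Y1 Y2 CiC CjC ne allowed sp.
have sK : [set Ci; Cj] \subset C by rewrite subUset !sub1set CiC CjC.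
rewrite setDDl.
have [A0 A0C [mi mj]] := allowed.
have gen : forall Z A, A \in Cstar ->
   (fC ((C :\: [set Ci; Cj]) :|: Z) A + (~~ [disjoint Ci & A] + ~~ [disjoint Cj & A])
   <= fC C A + #|[set B in Z | ~~ [disjoint B & A]]|)%N.
  move=> Z A HAC; rewrite -(sel_2eq (fun B => ~~ [disjoint B & A]) ne).
  exact: sel_replace.
have ge2 : (2 <= fC C A0)%N.
  have := selK (fun B => ~~ [disjoint B & A0]) sK.
  by rewrite (sel_2eq _ ne) /= mi mj.
have fin : forall Z : {set {set T}}, (forall A, A \in Cstar -> (#|[set B in Z | ~~ [disjoint B & A]]|
      <= ~~ [disjoint Ci & A] + ~~ [disjoint Cj & A])%N) ->
    forall A, A \in Cstar -> fC ((C :\: [set Ci; Cj]) :|: Z) A <= fC C A.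
  move=> Z hZ A HAC; have := gen Z A HAC; have := hZ A HAC.
  set u := #|_|; set v := fC _ _; set w := fC _ _.
  set a1 := nat_of_bool _; set a2 := nat_of_bool _.
  by clearbody u v w a1 a2; lia.
have fin2 : forall Z : {set {set T}}, (#|[set B in Z | ~~ [disjoint B & A0]]| <= 1)%N ->
    fC ((C :\: [set Ci; Cj]) :|: Z) A0 < fC C A0.
  move=> Z hZ; have := gen Z A0 A0C; rewrite mi mj /=.
  move: hZ; set u := #|_|; set v := fC _ _; set w := fC _ _.
  by clearbody u v w; lia.
have meetU : forall A : {set T}, ~~ [disjoint Ci :|: Cj & A] ->
    ~~ [disjoint Ci & A] || ~~ [disjoint Cj & A].
  move=> A /meetP [x xU xA]; move: xU; rewrite inE => /orP[] xC; apply/orP.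
    by left; apply/meetP; exists x.
  by right; apply/meetP; exists x.
have [s1 s2] := split_sub sp.
case: ifP => _.
  have hZ : forall A, A \in Cstar -> (#|[set B in [set Ci :|: Cj] | ~~ [disjoint B & A]]|
      <= ~~ [disjoint Ci & A] + ~~ [disjoint Cj & A])%N.
    move=> A HAC; rewrite sel_1; case: (boolP (~~ [disjoint Ci :|: Cj & A])) => //= h.
    by move/orP: (meetU A h) => [] ->; rewrite ?addn1 ?add1n.
  have := pot_lt (fin _ hZ) A0C (fin2 _ _) ge2.
  rewrite sel_1; move=> /(_ (leq_b1 _)) h.
  apply: leq_trans h; rewrite leq_add2r; exact: leq_b1.
have hY : forall A : {set T}, (~~ [disjoint Y1 & A] -> ~~ [disjoint Ci & A] || ~~ [disjoint Cj & A])
   /\ (~~ [disjoint Y2 & A] -> ~~ [disjoint Ci & A] || ~~ [disjoint Cj & A]).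
  by move=> A; split => h; apply: meetU; apply: meet_sub h.
case: (boolP (pure_merge Cstar Ci Cj)) => pu /=.
  rewrite add0n; apply: pot_le; apply: fin => A HAC.
  apply: leq_trans (sel_2 _ _ _) _; have [h1 h2] := hY A.
  apply: bnd h1 h2 _; right.
  case/existsP: pu => Ct /andP[CtC /andP[sCi sCj]].
  have [y yCi _] := meetP _ _ mi; have [z zCj _] := meetP _ _ mj.
  case/orP => /meetP [x xC xA].
    have HE := same_target HAC CtC xA (subsetP sCi x xC).
    by apply/andP; split; apply/meetP; [exists x | exists z; rewrite // HE (subsetP sCj)].
  have HE := same_target HAC CtC xA (subsetP sCj x xC).
  by apply/andP; split; apply/meetP; [exists y; rewrite // HE (subsetP sCi) | exists x].
have mix := impure_mixed allowed pu.
have hZ : forall A, A \in Cstar -> (#|[set B in [set Y1; Y2] | ~~ [disjoint B & A]]|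
      <= ~~ [disjoint Ci & A] + ~~ [disjoint Cj & A])%N.
  move=> A HAC; apply: leq_trans (sel_2 _ _ _) _; have [h1 h2] := hY A.
  by apply: bnd h1 h2 _; left; apply: (split_prop mix sp HAC).
apply: (pot_lt (fin _ hZ) A0C (fin2 _ _) ge2).
apply: leq_trans (sel_2 _ _ _) _.
by apply: (@bnd1 _ _ true) => //; apply: (split_prop mix sp A0C).
Qed.



Lemma run_pot (C C' : {set {set T}}) n : req_run Cstar ms C C' n -> n <= cdist Cstar C.
Proof.
elim => [D|D D1 D2 i k st _ IH] //.
by apply: leq_trans (step_pot st); rewrite leq_add2l.
Qed.

End Main.

Local Open Scope ring_scope.
Theorem lemma23 (R : realFieldType) (T : finType) (S : T -> T -> R)
    (Cstar C0 : {set {set T}}) (ms : seq ({set T} * {set T}))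
    (Cfin : {set {set T}}) (n : nat) :
  (forall x y, S x y = S y x) ->
  partition Cstar [set: T] ->
  stable S Cstar ->
  partition C0 [set: T] ->
  avg_linkage_tree S ms ->
  req_run Cstar ms C0 Cfin n ->
  (n <= cdist Cstar C0)%N.
Proof.
move=> hsym hCs hstab _ htr hrun.
have htree := tree_nodes hsym hCs hstab (Inv_singletons Cstar) htr.
exact: (run_pot hCs htree hrun).
Qed.
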